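(* Let $x_0 \in \mathcal{X}_n \subset \mathbb{R}^2$ and assume $\phi\in C^\infty(\mathbb{R}^2)$ is quasiconcave with $|\nabla\phi(x_0)|>0$. Suppose $V_h(x_0)$ satisfies: (i) if $p\in V_h(x_0)$ then $-p\in V_h(x_0)$; and (ii) if $p\in V_h(x_0)$ then there exists $q\in V_h(x_0)$ with $p\cdot q = 0$. Then $P_h^-[\phi](x_0)$ is nonempty.
   Context: $\mathcal{X}_n=\{x_1,\dots,x_n\}\subset\mathbb{R}^2$ is a finite point cloud; each $x\in\mathcal{X}_n$ has a neighbor set $N_h(x)\subset\mathcal{X}_n\setminus\{x\}$, and $V_h(x):=\{y-x : y\in N_h(x)\}$. For a function $u$ defined on $\mathcal{X}_n$ (or on a superset) and $x\in\mathcal{X}_n$, \[ P_h^-[u](x) := \{p\in\mathbb{R}^2 : -p\in V_h(x), \text{ and for all } y\in N_h(x),\ p\cdot(y-x)<0 \implies u(y)\le u(x)\}. \] A function $\phi$ is quasiconcave if $\phi(\lambda x + (1-\lambda)y)\ge\min(\phi(x),\phi(y))$ for all $x,y$ and $0<\lambda<1$. *)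

(* Defs.v *)
From Stdlib Require Import Reals List.
From Coquelicot Require Import Coquelicot.
Open Scope R_scope.

Definition pt := (R * R)%type.
Definition psub (y x : pt) : pt := (fst y - fst x, snd y - snd x).
Definition popp (p : pt) : pt := (- fst p, - snd p).
Definition dot (p q : pt) : R := fst p * fst q + snd p * snd q.
Definition pcomb (l : R) (x y : pt) : pt :=
  (l * fst x + (1 - l) * fst y, l * snd x + (1 - l) * snd y).

Definition dx (f : pt -> R) (z : pt) : R := Derive (fun t => f (t, snd z)) (fst z).
Definition dy (f : pt -> R) (z : pt) : R := Derive (fun t => f (fst z, t)) (snd z).

Fixpoint Ck (k : nat) (f : pt -> R) : Prop :=
  match k with
  | O => forall z : pt, continuous f z
  | S k' => (forall z : pt, continuous f z)
            /\ (forall z : pt, ex_derive (fun t => f (t, snd z)) (fst z)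
                               /\ ex_derive (fun t => f (fst z, t)) (snd z))
            /\ Ck k' (dx f) /\ Ck k' (dy f)
  end.

Definition smooth (f : pt -> R) : Prop := forall k, Ck k f.

Definition grad_norm (f : pt -> R) (z : pt) : R :=
  sqrt (dx f z ^ 2 + dy f z ^ 2).

Definition quasiconcave (f : pt -> R) : Prop :=
  forall (x y : pt) (l : R), 0 < l < 1 -> f (pcomb l x y) >= Rmin (f x) (f y).

Definition Vh (N : pt -> pt -> Prop) (x : pt) (v : pt) : Prop :=
  exists y, N x y /\ v = psub y x.

Definition Ph_minus (N : pt -> pt -> Prop) (u : pt -> R) (x : pt) (p : pt) : Prop :=
  Vh N x (popp p) /\
  (forall y, N x y -> dot p (psub y x) < 0 -> u y <= u x).

(* Main.v *)
Require Import Defs.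
From Stdlib Require Import Reals List Lra Psatz Classical.
From Coquelicot Require Import Coquelicot.
Open Scope R_scope.

Definition cross (a b : pt) : R := fst a * snd b - snd a * fst b.

Lemma three_contra (S : pt -> Prop)
  (Hc : forall a b l, 0 < l < 1 -> S a -> S b -> S (pcomb l a b))
  (H0 : ~ S (0,0)) (u1 v a : pt) :
  S u1 -> S v -> S a -> cross u1 v >= 0 -> cross v a > 0 -> cross a u1 > 0 -> False.
Proof.
  destruct u1 as [x1 y1], v as [x2 y2], a as [x3 y3]; unfold cross; simpl.
  intros S1 S2 S3 Ha Hb Hcc.
  set (A := x1*y2 - y1*x2) in *. set (B := x2*y3 - y2*x3) in *.
  set (C := x3*y1 - y3*x1) in *.
  assert (Hw : S (pcomb (B/(B+C)) (x1,y1) (x2,y2))).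
  { apply Hc; auto. split. apply Rdiv_lt_0_compat; lra.
    apply (Rmult_lt_reg_r (B+C)); [lra|]. unfold Rdiv; rewrite Rmult_assoc, Rinv_l; lra. }
  assert (Hid1 : B*x1 + C*x2 + A*x3 = 0) by (unfold A,B,C; ring).
  assert (Hid2 : B*y1 + C*y2 + A*y3 = 0) by (unfold A,B,C; ring).
  destruct (Req_dec A 0) as [HA|HA].
  - apply H0. replace (0,0) with (pcomb (B/(B+C)) (x1,y1) (x2,y2)); auto.
    unfold pcomb; simpl. f_equal.
    + replace (B / (B + C) * x1 + (1 - B / (B + C)) * x2) with ((B*x1 + C*x2)/(B+C)) by (field; lra).
      rewrite HA in Hid1. replace (B*x1+C*x2) with 0 by lra. unfold Rdiv; ring.
    + replace (B / (B + C) * y1 + (1 - B / (B + C)) * y2) with ((B*y1 + C*y2)/(B+C)) by (field; lra).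
      rewrite HA in Hid2. replace (B*y1+C*y2) with 0 by lra. unfold Rdiv; ring.
  - assert (HA' : A > 0) by lra.
    apply H0. replace (0,0) with (pcomb ((B+C)/(A+B+C)) (pcomb (B/(B+C)) (x1,y1) (x2,y2)) (x3,y3)).
    + apply Hc; auto. split. apply Rdiv_lt_0_compat; lra.
      apply (Rmult_lt_reg_r (A+B+C)); [lra|]. unfold Rdiv; rewrite Rmult_assoc, Rinv_l; lra.
    + unfold pcomb; simpl. f_equal.
      * transitivity ((B*x1 + C*x2 + A*x3)/(A+B+C)). field; lra.
        rewrite Hid1. unfold Rdiv; ring.
      * transitivity ((B*y1 + C*y2 + A*y3)/(A+B+C)). field; lra.
        rewrite Hid2. unfold Rdiv; ring.
Qed.

Lemma extreme (S : pt -> Prop)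
  (Hc : forall a b l, 0 < l < 1 -> S a -> S b -> S (pcomb l a b))
  (H0 : ~ S (0,0)) (Q : pt -> Prop) (HQ : forall v, Q v -> S v) (l : list pt) :
  (exists v, In v l /\ Q v) ->
  exists u1, In u1 l /\ Q u1 /\ forall v, In v l -> Q v -> cross u1 v >= 0.
Proof.
  induction l as [|a l IH]; intros [w [Hw Qw]].
  - destruct Hw.
  - destruct (classic (exists v, In v l /\ Q v)) as [Hex|Hnex].
    + destruct (IH Hex) as [u1 [Hu1 [Qu1 Hext]]].
      destruct (classic (Q a)) as [Qa|nQa].
      * destruct (Rle_or_lt 0 (cross u1 a)) as [Hp|Hn].
        -- exists u1; split; [right; auto|split; auto].
           intros v [<-|Hv] Qv; [lra|auto].
        -- exists a; split; [left; auto|split; auto].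
           intros v [<-|Hv] Qv.
           ++ unfold cross; lra.
           ++ destruct (Rle_or_lt 0 (cross a v)) as [Hp'|Hn']; [lra|].
              exfalso. apply (three_contra S Hc H0 u1 v a); auto.
              ** unfold cross in *; lra.
              ** unfold cross in *; lra.
      * exists u1; split; [right; auto|split; auto].
        intros v [<-|Hv] Qv; [contradiction|auto].
    + destruct Hw as [<-|Hw]; [|exfalso; apply Hnex; eauto].
      exists a; split; [left; auto|split; auto].
      intros v [<-|Hv] Qv; [unfold cross; lra|exfalso; apply Hnex; eauto].
Qed.

Lemma popp_popp p : popp (popp p) = p.
Proof. destruct p; unfold popp; simpl; f_equal; ring. Qed.

Theorem theorem2
  (X : list pt) (N : pt -> pt -> Prop)
  (HN : forall x y, In x X -> N x y -> In y X /\ y <> x)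
  (x0 : pt) (Hx0 : In x0 X)
  (HNne : exists y, N x0 y)
  (phi : pt -> R) (Hsmooth : smooth phi) (Hqc : quasiconcave phi)
  (Hgrad : grad_norm phi x0 > 0)
  (Hsym : forall p, Vh N x0 p -> Vh N x0 (popp p))
  (Horth : forall p, Vh N x0 p -> exists q, Vh N x0 q /\ dot p q = 0) :
  exists p, Ph_minus N phi x0 p.
Proof.
  set (tr := fun v : pt => (fst x0 + fst v, snd x0 + snd v)).
  set (S := fun v => phi (tr v) > phi x0).
  assert (Hc : forall a b l, 0 < l < 1 -> S a -> S b -> S (pcomb l a b)).
  { intros a b l Hl Sa Sb. unfold S in *.
    replace (tr (pcomb l a b)) with (pcomb l (tr a) (tr b)).
    - specialize (Hqc (tr a) (tr b) l Hl). unfold Rmin in Hqc.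
      destruct (Rle_dec _ _); lra.
    - unfold tr, pcomb; simpl; f_equal; ring. }
  assert (H0 : ~ S (0,0)).
  { unfold S, tr; simpl. rewrite !Rplus_0_r, <- surjective_pairing; lra. }
  assert (Htr : forall y, tr (psub y x0) = y).
  { intros [a b]; unfold tr, psub; simpl; f_equal; ring. }
  set (Q := fun v => exists y, N x0 y /\ v = psub y x0 /\ phi y > phi x0).
  assert (HQ : forall v, Q v -> S v).
  { intros v [y [_ [-> Hy]]]. unfold S; rewrite Htr; auto. }
  destruct (classic (exists y, N x0 y /\ phi y > phi x0)) as [[y [Ny Py]]|Hno].
  - destruct (extreme S Hc H0 Q HQ (map (fun y => psub y x0) X)) as [u1 [_ [Qu1 Hext]]].
    { exists (psub y x0); split.
      - apply (in_map (fun y => psub y x0)). apply (HN x0 y Hx0 Ny).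
      - exists y; auto. }
    assert (Vu1 : Vh N x0 u1) by (destruct Qu1 as [y1 [Ny1 [-> _]]]; exists y1; auto).
    assert (Su1 := HQ u1 Qu1).
    assert (Hnz : fst u1 * fst u1 + snd u1 * snd u1 > 0).
    { destruct u1 as [a b]; simpl.
      destruct (Req_dec a 0) as [->|Ha]; [destruct (Req_dec b 0) as [->|Hb]|].
      - contradiction. - nra. - nra. }
    destruct (Horth u1 Vu1) as [q [Vq Hdq]].
    assert (Key : forall u, (fst u1 * fst u1 + snd u1 * snd u1) * dot q u = cross u1 q * cross u1 u).
    { intros u.
      transitivity (dot u1 q * dot u1 u + cross u1 q * cross u1 u); [unfold dot, cross; ring|].
      rewrite Hdq; ring. }
    destruct (Rle_or_lt 0 (cross u1 q)) as [Hp|Hn].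
    + exists q; split; [apply Hsym; auto|].
      intros z Nz Hdz. destruct (Rle_or_lt (phi z) (phi x0)) as [|Hz]; auto. exfalso.
      assert (Hcz : cross u1 (psub z x0) >= 0).
      { apply Hext. apply (in_map (fun y => psub y x0)), (HN x0 z Hx0 Nz). exists z; auto. }
      specialize (Key (psub z x0)).
      assert (0 <= cross u1 q * cross u1 (psub z x0)) by nra. nra.
    + exists (popp q); split; [rewrite popp_popp; auto|].
      intros z Nz Hdz. destruct (Rle_or_lt (phi z) (phi x0)) as [|Hz]; auto. exfalso.
      assert (Hcz : cross u1 (psub z x0) >= 0).
      { apply Hext. apply (in_map (fun y => psub y x0)), (HN x0 z Hx0 Nz). exists z; auto. }
      specialize (Key (psub z x0)).
      assert (cross u1 q * cross u1 (psub z x0) <= 0) by nra.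
      assert (dot (popp q) (psub z x0) = - dot q (psub z x0)) by (unfold dot, popp; simpl; ring).
      nra.
  - destruct HNne as [y Ny].
    exists (popp (psub y x0)); split.
    + rewrite popp_popp; exists y; auto.
    + intros z Nz _. destruct (Rle_or_lt (phi z) (phi x0)) as [|Hz]; auto.
      exfalso; apply Hno; eauto.
Qed.
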